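(* In the contention game with $k=2$ channels under acknowledgement-based feedback and $n\ge5$ players, the anonymous protocol $f^2$ (in every slot, regardless of history, a pending player transmits on each of the two channels with probability $1/2$ and never stays idle) is not an equilibrium protocol. In fact, when all other players use $f^2$, the protocol that does not transmit at $t=1$ and then follows $f^2$ gives any player strictly smaller expected latency than $f^2$.
   Context: Contention game: $n$ players, channels $K=\{1,\dots,k\}$, slots $t=1,2,\dots$; each player has one packet and is initially pending. In each slot a pending player chooses (possibly at random) an action in $\{0,1,\dots,k\}$ ($0$ = idle, $a$ = transmit on channel $a$). A lone transmitter on a channel succeeds and leaves; two or more transmitters on a channel collide and remain pending. Latency = slot of a player's successful transmission; players minimize expected latency. Acknowledgement-based feedback: only a player who attempted transmission learns whether she succeeded; decision rules depend only on the personal action history. An anonymous protocol is an equilibrium protocol if, when all players use it, no player at any slot and after any history can decrease her conditional expected latency by unilaterally deviating. *)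

(* Defs.v *)
From HB Require Import structures.
From mathcomp Require Import all_boot all_order all_algebra.
From mathcomp Require Import all_classical all_reals.
From mathcomp Require Import ereal sequences.
Set Implicit Arguments. Unset Strict Implicit. Unset Printing Implicit Defensive.
Import Order.TTheory GRing.Theory Num.Theory.
Local Open Scope ring_scope.

(** Actions: [0] = idle, [a] (1 <= a <= k) = transmit on channel [a]. *)
Definition action (k : nat) := 'I_k.+1.
Definition idle {k : nat} : action k := ord0.

(** Under acknowledgement-based feedback, every past transmission of a still
    pending player failed, so the action sequence is her whole information. *)
Definition history (k : nat) := seq (action k).

Definition protocol (R : realType) (k : nat) := history k -> {ffun action k -> R}.

Definition valid_protocol (R : realType) (k : nat) (p : protocol R k) : Prop :=
  forall h, (forall a, 0 <= p h a) /\ \sum_(a : action k) p h a = 1.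

(** Configuration of the system at the beginning of a slot:
    [Some h] = pending with history [h], [None] = already succeeded. *)
Definition config (n k : nat) := 'I_n -> option (history k).

Definition init_config (n k : nat) : config n k := fun _ => Some [::].

Definition profile (R : realType) (n k : nat) := 'I_n -> protocol R k.

Definition joint_weight (R : realType) (n k : nat) (P : profile R n k)
  (c : config n k) (a : {ffun 'I_n -> action k}) : R :=
  \prod_(i : 'I_n)
     match c i with
     | Some h => P i h (a i)
     | None => (a i == idle)%:R
     end.

Definition next_config (n k : nat) (c : config n k) (a : {ffun 'I_n -> action k})
  : config n k :=
  fun i =>
    match c i with
    | None => None
    | Some h =>
        if (a i != idle) &&
           [forall j : 'I_n, (j != i) ==> (c j != None) ==> (a j != a i)]
        then None
        else Some (rcons h (a i))
    end.

(** Finitely supported distributions over configurations (weighted list). *)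
Definition cdist (R : realType) (n k : nat) := seq (R * config n k).

Definition step (R : realType) (n k : nat) (P : profile R n k)
  (d : cdist R n k) : cdist R n k :=
  flatten [seq [seq (x.1 * joint_weight P x.2 a, next_config x.2 a)
               | a <- enum {: {ffun 'I_n -> action k}}] | x <- d].

Definition dist_at (R : realType) (n k : nat) (P : profile R n k) (t : nat)
  : cdist R n k := iter t (step P) [:: (1, @init_config n k)].

Definition pend_prob (R : realType) (n k : nat) (P : profile R n k) (t : nat)
  (i : 'I_n) (Q : pred (history k)) : R :=
  \sum_(x <- dist_at P t)
     match x.2 i with Some h => if Q h then x.1 else 0 | None => 0 end.

(** Expected latency of player [i]:  E[L] = sum_{t >= 0} P(L > t),
    and L > t iff the player is still pending after [t] slots. *)
Definition exp_latency (R : realType) (n k : nat) (P : profile R n k)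
  (i : 'I_n) : \bar R :=
  (\sum_(t <oo) (pend_prob P t i predT)%:E)%E.

Definition deviate (R : realType) (n k : nat) (f g : protocol R k) (i : 'I_n)
  : profile R n k := fun j => if j == i then g else f.

Definition all_use (R : realType) (n k : nat) (f : protocol R k) : profile R n k :=
  fun _ => f.

(** Probability that player [i] is pending at slot [size h + 1] with
    history exactly [h]. *)
Definition hist_prob (R : realType) (n k : nat) (P : profile R n k)
  (i : 'I_n) (h : history k) : R :=
  pend_prob P (size h) i (fun h' => h' == h).

(** Conditional expected latency of player [i] given that she is pending at
    slot [size h + 1] with history [h]:
      E[L | A_h] = (sum_{t>=0} P(L > t /\ A_h)) / P(A_h),
    where for t >= size h, (L > t /\ A_h) means pending after t slots with a
    history starting with h, and for t < size h it is just A_h. *)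
Definition cond_latency (R : realType) (n k : nat) (P : profile R n k)
  (i : 'I_n) (h : history k) : \bar R :=
  ((\sum_(t <oo)
      (pend_prob P (maxn t (size h)) i (fun h' => take (size h) h' == h))%:E)
   * ((hist_prob P i h)^-1)%:E)%E.

Definition switch_at (R : realType) (k : nat) (f g : protocol R k) (s : nat)
  : protocol R k := fun h' => if (size h' < s)%N then f h' else g h'.

Definition equilibrium (R : realType) (n k : nat) (f : protocol R k) : Prop :=
  forall (i : 'I_n) (h : history k) (g : protocol R k),
    valid_protocol g ->
    0 < hist_prob (@all_use R n k f) i h ->
    (cond_latency (@all_use R n k f) i h
       <= cond_latency (deviate f (switch_at f g (size h)) i) i h)%E.

Definition f2 (R : realType) : protocol R 2 :=
  fun _ => [ffun a : action 2 => if a == idle then 0 else 2^-1].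

Definition f2_idle_first (R : realType) : protocol R 2 :=
  fun h => if h is [::] then [ffun a : action 2 => (a == idle)%:R] else f2 R h.

(* Main.v *)
Require Import Defs.
From HB Require Import structures.
From mathcomp Require Import all_boot all_order all_algebra.
From mathcomp Require Import all_classical all_reals.
From mathcomp Require Import ereal sequences.
From mathcomp Require Import ring lra.
From mathcomp Require Import topology normedtype.
Import Order.TTheory GRing.Theory Num.Theory.
Local Open Scope ring_scope.
Set Implicit Arguments. Unset Strict Implicit. Unset Printing Implicit Defensive.

Section S.
Variable R : realType.
Variable n : nat.

Definition Ex (d : cdist R n 2) (F : config n 2 -> R) : R :=
  \sum_(x <- d) x.1 * F x.2.

Definition Tk (P : profile R n 2) (F : config n 2 -> R) (c : config n 2) : R :=
  \sum_(a : {ffun 'I_n -> action 2}) joint_weight P c a * F (next_config c a).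

Lemma Ex_step P d F : Ex (step P d) F = Ex d (Tk P F).
Proof.
rewrite /Ex /step big_flatten /= big_map; apply: eq_bigr => x _.
rewrite big_map big_enum /= /Tk mulr_sumr; apply: eq_bigr => a _.
by rewrite mulrA.
Qed.

Definition pnd (i : 'I_n) (c : config n 2) : R := (c i != None)%:R.

Lemma pend_probE P t i : pend_prob P t i predT = Ex (dist_at P t) (pnd i).
Proof.
rewrite /pend_prob /Ex; apply: eq_bigr => x _.
by rewrite /pnd; case: (x.2 i) => [h|] /=; rewrite ?mulr1 ?mulr0.
Qed.

Lemma Ex_lin d F G a : Ex d (fun c => F c - a * G c) = Ex d F - a * Ex d G.
Proof.
rewrite /Ex mulr_sumr -sumrB; apply: eq_bigr => x _; ring.
Qed.

Lemma potential P (W : config n 2 -> R) i :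
  (forall c, Tk P W c = W c - pnd i c) ->
  forall t, Ex (dist_at P t) W = W (@init_config n 2) - \sum_(s < t) pend_prob P s i predT.
Proof.
move=> HT; elim=> [|t IH].
  by rewrite big_ord0 subr0 /Ex /dist_at /= big_cons big_nil addr0 mul1r.
rewrite big_ord_recr /=.
rewrite Ex_step.
have -> : Ex (dist_at P t) (Tk P W) = Ex (dist_at P t) (fun c => W c - 1 * pnd i c).
  by rewrite /Ex; apply: eq_bigr => x _; rewrite HT mul1r.
by rewrite Ex_lin IH mul1r pend_probE; ring.
Qed.


Definition succ (c : config n 2) (a : {ffun 'I_n -> action 2}) (k : 'I_n) : bool :=
  (c k != None) && (a k != idle) &&
  [forall j, (j != k) ==> (c j != None) ==> (a j != a k)].

Lemma next_pend c a k :
  (next_config c a k != None) = (c k != None) && ~~ succ c a k.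
Proof.
rewrite /next_config /succ; case: (c k) => [h|] //=.
by case: ifP.
Qed.

Definition wt (c : config n 2) (tr : pred 'I_n) (k : 'I_n) (y : action 2) : R :=
  if (c k != None) && tr k then (y != idle)%:R / 2 else (y == idle)%:R.

Definition idle_d : {ffun action 2 -> R} := [ffun y => (y == idle)%:R].

Lemma jw_wt P c tr a :
  (forall k h, c k = Some h -> P k h = if tr k then f2 R h else idle_d) ->
  joint_weight P c a = \prod_k wt c tr k (a k).
Proof.
move=> HP; rewrite /joint_weight; apply: eq_bigr => k _.
rewrite /wt; case E: (c k) => [h|] //=; rewrite (HP k h E).
case: (tr k); rewrite /f2 /idle_d !ffunE //.
by case: (a k == idle); rewrite /= ?mul0r ?mul1r.
Qed.


Lemma sum_tr : \sum_(y : action 2) (y != idle)%:R / 2 = 1 :> R.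
Proof. rewrite !big_ord_recr big_ord0 /=; lra. Qed.

Lemma sum_idle : \sum_(y : action 2) (y == idle)%:R = 1 :> R.
Proof. rewrite !big_ord_recr big_ord0 /=; lra. Qed.

Lemma sum_wt1 c tr : \sum_(a : {ffun 'I_n -> action 2}) \prod_k wt c tr k (a k) = 1.
Proof.
rewrite -(bigA_distr_bigA (fun k y => wt c tr k y)) /=; apply: big1 => k _.
by rewrite /wt; case: ((c k != None) && tr k); [exact: sum_tr | exact: sum_idle].
Qed.

Lemma prod_bool (I : finType) (P : pred I) (b : pred I) :
  \prod_(k | P k) (b k)%:R = [forall k, P k ==> b k]%:R :> R.
Proof.
case: (boolP [forall k, P k ==> b k]) => [/forallP H|H].
  by rewrite big1 // => k Pk; rewrite (implyP (H k) Pk).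
have [k] : exists k, ~~ (P k ==> b k) by apply/forallPn.
rewrite negb_imply => /andP [Pk nb].
by rewrite (bigD1 k) //= (negbTE nb) mul0r.
Qed.


Definition hx (c : config n 2) (j : 'I_n) (x : action 2) (k : 'I_n) (y : action 2) : R :=
  if k == j then ((y == x) && (x != idle))%:R else ((c k == None) || (y != x))%:R.

Lemma succ_sum c a j : c j != None ->
  (succ c a j)%:R = \sum_x \prod_k hx c j x k (a k).
Proof.
move=> cj; rewrite (bigD1 (a j)) //= [X in _ + X]big1 ?addr0; last first.
  move=> x xa; rewrite (bigD1 j) //= /hx eqxx.
  by rewrite eq_sym (negbTE xa) /= mul0r.
rewrite (bigD1 j) //= /hx eqxx eqxx /=.
rewrite (eq_bigr (fun k => ((k != j) ==> (c k != None) ==> (a k != a j))%:R)); last first.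
  by move=> k /negbTE ->; case: (c k).
rewrite (prod_bool _ (fun k => (k != j) ==> (c k != None) ==> (a k != a j))).
rewrite /succ cj /= -natrM mulnb; congr ((nat_of_bool _)%:R).
apply/idP/idP.
  move=> /andP [-> /forallP H] /=; apply/forallP => k; apply/implyP => kj.
  by have := H k; rewrite kj.
move=> /andP [-> /forallP H] /=; apply/forallP => k.
by have := H k; case: (k != j).
Qed.


Lemma factor (c : config n 2) (tr : pred 'I_n) (j : 'I_n) (x : action 2) (k : 'I_n) :
  c j != None -> tr j -> x != idle ->
  \sum_y wt c tr k y * hx c j x k y = if (c k != None) && tr k then 2^-1 else 1.
Proof.
move=> cj trj; case: x => [[|[|[|x]]] Hx] xi //.
all: rewrite /wt /hx; case: (k =P j) => [->|_]; first by rewrite cj trj /= !big_ord_recr big_ord0 /=; lra.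
all: case: (c k) => [h|] /=; first case: (tr k) => /=.
all: rewrite !big_ord_recr big_ord0 /=; try lra.
Qed.


Lemma prod_if (P : pred 'I_n) (x : R) :
  \prod_k (if P k then x else 1) = x ^+ #|[pred k | P k]|.
Proof. by rewrite -big_mkcond /= -prodr_const. Qed.

Lemma sum_wt_succ (c : config n 2) (tr : pred 'I_n) (j : 'I_n) :
  c j != None -> tr j ->
  \sum_(a : {ffun 'I_n -> action 2}) (\prod_k wt c tr k (a k)) * (succ c a j)%:R
  = 2 * (2^-1) ^+ #|[pred k | (c k != None) && tr k]|.
Proof.
move=> cj trj.
rewrite (eq_bigr (fun a : {ffun 'I_n -> action 2} => \sum_x \prod_k (wt c tr k (a k) * hx c j x k (a k)))); last first.
  move=> a _; rewrite (succ_sum a cj) mulr_sumr; apply: eq_bigr => x _; by rewrite big_split.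
rewrite exchange_big /=.
rewrite (eq_bigr (fun x => \prod_k \sum_y wt c tr k y * hx c j x k y)); last first.
  by move=> x _; rewrite (bigA_distr_bigA (fun k y => wt c tr k y * hx c j x k y)).
rewrite !big_ord_recr big_ord0 /= add0r.
rewrite [X in X + _ + _](bigD1 j) //= [X in X * _ + _ + _]big1 ?mul0r ?add0r; last first.
  by move=> y _; rewrite /hx eqxx andbF mulr0.
rewrite !(eq_bigr _ (fun k _ => factor k cj trj _)) //.
by rewrite (prod_if (fun k => (c k != None) && tr k)); ring.
Qed.


Lemma supp (c : config n 2) (tr : pred 'I_n) (a : {ffun 'I_n -> action 2}) :
  \prod_k wt c tr k (a k) != 0 ->
  forall k, if (c k != None) && tr k then a k != idle else a k == idle.
Proof.
move/prodf_neq0 => H k; have := H k isT; rewrite /wt.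
case: ((c k != None) && tr k); first by case: (a k != idle); rewrite //= mul0r eqxx.
by case: (a k == idle); rewrite //= eqxx.
Qed.

Lemma three_vals (x y z : action 2) :
  x != idle -> y != idle -> z != idle -> x != y -> y != z -> x != z -> False.
Proof.
by case: x => [[|[|[|?]]] ?]; case: y => [[|[|[|?]]] ?]; case: z => [[|[|[|?]]] ?].
Qed.

Lemma succ_pend c a k : succ c a k -> c k != None.
Proof. by rewrite /succ => /andP [/andP [] ]. Qed.

Lemma succ_nidle c a k : succ c a k -> a k != idle.
Proof. by rewrite /succ => /andP [/andP [] ]. Qed.

Lemma succ_other c a k j : succ c a k -> j != k -> c j != None -> a j != a k.
Proof.
rewrite /succ => /andP [_ /forallP H] jk cj.
by have := H j; rewrite jk cj.
Qed.

Lemma two_succ c a k l p : succ c a k -> succ c a l -> k != l ->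
  c p != None -> p != k -> p != l -> a p != idle -> False.
Proof.
move=> sk sl kl cp pk pl ap.
apply: (three_vals (succ_nidle sk) (succ_nidle sl) ap).
- by rewrite eq_sym; apply: (succ_other sk); [rewrite eq_sym | exact: succ_pend sl].
- by rewrite eq_sym; apply: (succ_other sl).
- by rewrite eq_sym; apply: (succ_other sk).
Qed.

Definition mc (c : config n 2) : nat := #|[pred k | c k != None]|.

Lemma exists_third (A : pred 'I_n) x y : (3 <= #|A|)%N ->
  exists p, [&& p \in A, p != x & p != y].
Proof.
move=> H3; case: (pickP [pred p | [&& p \in A, p != x & p != y]]) => [p Hp|H0].
  by exists p.
move: H3; rewrite (cardD1 x) (cardD1 y) eq_card0 ?addn0.
  by case: (x \in A); case: (y \in _).
move=> p; rewrite !inE; have := H0 p; rewrite /=.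
by case: (p \in A); case: (p != x); case: (p != y).
Qed.

Lemma exists_fourth (A : pred 'I_n) x y z : (4 <= #|A|)%N ->
  exists p, [&& p \in A, p != x, p != y & p != z].
Proof.
move=> H3; case: (pickP [pred p | [&& p \in A, p != x, p != y & p != z]]) => [p Hp|H0].
  by exists p.
move: H3; rewrite (cardD1 x) (cardD1 y) (cardD1 z) eq_card0 ?addn0.
  by case: (x \in A); case: (y \in _); case: (z \in _).
move=> p; rewrite !inE; have := H0 p; rewrite /=.
by case: (p \in A); case: (p != x); case: (p != y); case: (p != z).
Qed.

Lemma three_card (A : pred 'I_n) x y z : x \in A -> y \in A -> z \in A ->
  x != y -> x != z -> y != z -> (3 <= #|A|)%N.
Proof.
move=> xA yA zA xy xz yz.
rewrite (cardD1 x) (cardD1 y) (cardD1 z) !inE xA yA zA /=.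
by rewrite (eq_sym y x) (eq_sym z y) (eq_sym z x) xy xz yz.
Qed.

Lemma mc_none c a : (forall k, ~~ succ c a k) -> mc (next_config c a) = mc c.
Proof.
move=> H; rewrite /mc; apply: eq_card => k; rewrite !inE next_pend.
by rewrite (negbTE (H k)) andbT.
Qed.

Lemma mc_one c a k : succ c a k -> (forall l, l != k -> ~~ succ c a l) ->
  mc (next_config c a) = (mc c).-1.
Proof.
move=> sk H; rewrite /mc (cardD1 k [pred k | c k != None]) inE (succ_pend sk) /=.
rewrite add0n; apply: eq_card => l; rewrite !inE next_pend.
case: (l =P k) => [->|/eqP lk] /=; first by rewrite sk andbF.
by rewrite (negbTE (H l lk)) andbT.
Qed.


Definition Vf (m : nat) : R := if m == 1%N then 1 else 2 ^+ m / m%:R.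
Definition Df (m : nat) : R := if (3 <= m)%N then Vf m - Vf m.-1 else 0.
Definition WA (i : 'I_n) (c : config n 2) : R := if c i != None then Vf (mc c) else 0.

Lemma not_succ_witness (c : config n 2) (a : {ffun 'I_n -> action 2}) (i : 'I_n) : c i != None -> a i != idle -> ~~ succ c a i ->
  exists j, [&& j != i, c j != None & a j == a i].
Proof.
move=> ci ai; rewrite /succ ci ai /= => /forallPn [j].
move=> H; exists j; move: H.
by case: (j != i); case: (c j != None); case: (a j == a i).
Qed.

Lemma WA_next (i : 'I_n) (c : config n 2) (a : {ffun 'I_n -> action 2}) : c i != None -> (forall k, c k != None -> a k != idle) ->
  WA i (next_config c a) = Vf (mc c) - Vf (mc c) * (succ c a i)%:R
     - Df (mc c) * \sum_(k | k != i) (succ c a k)%:R.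
Proof.
move=> ci sup.
case: (boolP (succ c a i)) => si.
- have -> : WA i (next_config c a) = 0 by rewrite /WA next_pend ci si.
  rewrite mulr1 subrr sub0r.
  case: (leqP 3 (mc c)) => m3; last by rewrite /Df leqNgt m3 mul0r oppr0.
  rewrite big1 ?mulr0 ?oppr0 // => k ki.
  case: (boolP (succ c a k)) => // sk; exfalso.
  have [p /and3P [pA pi pk]] := exists_third (A := [pred k | c k != None]) i k m3.
  rewrite inE in pA.
  by apply: (two_succ si sk _ pA pi pk (sup p pA)); rewrite eq_sym.
- have -> : WA i (next_config c a) = Vf (mc (next_config c a)).
    by rewrite /WA next_pend ci si.
  rewrite mulr0 subr0.
  case: (pickP (succ c a)) => [k sk | none].
  + have ki : k != i by apply/eqP => E; move: si; rewrite -E sk.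
    have only : forall l, l != k -> ~~ succ c a l.
      move=> l lk; apply/negP => sl.
      have li : l != i by apply/eqP => E; move: si; rewrite -E sl.
      by apply: (two_succ sk sl _ ci _ _ (sup i ci)); rewrite eq_sym.
    rewrite (mc_one sk only).
    have [j /and3P [ji cj aj]] := not_succ_witness ci (sup i ci) si.
    have jk : j != k.
      have ik : i != k by rewrite eq_sym.
      apply/eqP => E; have := succ_other sk ik ci.
      by rewrite -E (eqP aj) eqxx.
    have m3 : (3 <= mc c)%N.
      apply: (three_card (A := [pred k | c k != None]) (x := i) (y := j) (z := k)).
      - by rewrite inE.
      - by rewrite inE.
      - by rewrite inE (succ_pend sk).
      - by rewrite eq_sym.
      - by rewrite eq_sym.
      - by [].
    rewrite (bigD1 k) //= big1 ?addr0; last first.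
      by move=> l /andP [li lk]; rewrite (negbTE (only l lk)).
    by rewrite sk /Df m3 /=; ring.
  + rewrite mc_none; last by move=> k; rewrite none.
    by rewrite big1 ?mulr0 ?subr0 // => k _; rewrite none.
Qed.


Lemma Vf_id M : (1 <= M)%N -> 2 * (2^-1)^+M * (Vf M + (M.-1)%:R * Df M) = 1 :> R.
Proof.
case: M => [|[|[|M]]] // _.
- by rewrite /Vf /Df /=; field.
- by rewrite /Vf /Df /=; field.
rewrite /Df /Vf /= exprVn (exprS _ M.+2).
have hX : (2:R) ^+ M.+2 != 0 by rewrite expf_neq0.
have h3 : (M.+3%:R : R) != 0 by rewrite pnatr_eq0.
have h2 : (M.+2%:R : R) != 0 by rewrite pnatr_eq0.
field; rewrite ?hX ?h3 ?h2 //.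
by rewrite -!natrD !pnatr_eq0 !addn_eq0.
Qed.


Definition PA : profile R n 2 := @all_use R n 2 (f2 R).

Lemma sum_succ_others (c : config n 2) (tr : pred 'I_n) (i : 'I_n) (q : R) :
  (forall k, k != i -> c k != None -> tr k) ->
  q = 2 * (2^-1) ^+ #|[pred k | (c k != None) && tr k]| ->
  \sum_(a : {ffun 'I_n -> action 2}) (\prod_k wt c tr k (a k)) *
      \sum_(k | k != i) (succ c a k)%:R
  = #|[pred k | (k != i) && (c k != None)]|%:R * q.
Proof.
move=> Htr ->.
rewrite (eq_bigr (fun a : {ffun 'I_n -> action 2} => \sum_(k | k != i) (\prod_k wt c tr k (a k)) * (succ c a k)%:R)); last first.
  by move=> a _; rewrite mulr_sumr.
rewrite exchange_big /=.
rewrite (eq_bigr (fun k => (c k != None)%:R * (2 * (2^-1) ^+ #|[pred k | (c k != None) && tr k]|))); last first.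
  move=> k ki; case: (boolP (c k != None)) => ck.
    by rewrite mul1r sum_wt_succ // Htr.
  rewrite mul0r big1 // => a _.
  have -> : succ c a k = false by apply/negP => /succ_pend; rewrite (negbTE ck).
  by rewrite mulr0.
rewrite -mulr_suml; congr (_ * _).
rewrite -sumr_const big_mkcondr /=; apply: eq_bigr => k _.
by case: (c k != None).
Qed.


Lemma card_others (c : config n 2) (i : 'I_n) : c i != None ->
  #|[pred k | (k != i) && (c k != None)]| = (mc c).-1.
Proof.
move=> ci; rewrite /mc (cardD1 i [pred k | c k != None]) inE ci /=.
by rewrite add0n; apply: eq_card => k; rewrite !inE.
Qed.

Lemma mc_pos (c : config n 2) (i : 'I_n) : c i != None -> (1 <= mc c)%N.
Proof. by move=> ci; rewrite /mc (cardD1 i [pred k | c k != None]) inE ci. Qed.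

Lemma TA (i : 'I_n) (c : config n 2) : Tk PA (WA i) c = WA i c - pnd i c.
Proof.
have HP : forall k h, c k = Some h -> PA k h = if xpredT k then f2 R h else idle_d by [].
rewrite /Tk (eq_bigr (fun a : {ffun 'I_n -> action 2} => \prod_k wt c xpredT k (a k) * WA i (next_config c a))); last first.
  by move=> a _; rewrite (@jw_wt PA c xpredT a HP).
case: (boolP (c i != None)) => ci; last first.
  rewrite /WA /pnd (negbTE ci) /= subr0 big1 // => a _.
  by rewrite next_pend (negbTE ci) /= mulr0.
set M := mc c.
set q : R := 2 * (2^-1) ^+ M.
rewrite (eq_bigr (fun a : {ffun 'I_n -> action 2} => Vf M * \prod_k wt c xpredT k (a k)
   - Vf M * (\prod_k wt c xpredT k (a k) * (succ c a i)%:R)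
   - Df M * (\prod_k wt c xpredT k (a k) * \sum_(k | k != i) (succ c a k)%:R))); last first.
  move=> a _; case: (eqVneq (\prod_k wt c xpredT k (a k)) 0) => [->|nz].
    by rewrite !mul0r !mulr0 !subr0.
  rewrite WA_next //; first by ring.
  by move=> k ck; have := supp nz k; rewrite ck.
rewrite !sumrB -!mulr_sumr sum_wt1 sum_wt_succ //.
rewrite (@sum_succ_others c xpredT i q) //; last first.
  rewrite /q /M /mc; congr (_ * _ ^+ _); apply: eq_card => k; by rewrite !inE andbT.
rewrite card_others // /WA /pnd ci /=.
have := Vf_id (mc_pos ci); rewrite -/M.
have -> : #|[pred k | (c k != None) && xpredT k]| = M.
  by rewrite /M /mc; apply: eq_card => k; rewrite !inE andbT.
rewrite -/q => H.
have -> : Vf M * 1 - Vf M * q - Df M * ((M.-1)%:R * q) = Vf M - q * (Vf M + (M.-1)%:R * Df M) by ring.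
by rewrite H.
Qed.


Definition PB (i : 'I_n) : profile R n 2 := deviate (f2 R) (f2_idle_first R) i.

Definition WB (i : 'I_n) (c : config n 2) : R :=
  if c i == Some [::] then 1 + Tk (PB i) (WA i) c else WA i c.

Lemma jw_BA (i : 'I_n) (c : config n 2) a : c i != Some [::] ->
  joint_weight (PB i) c a = joint_weight PA c a.
Proof.
move=> ci; rewrite /joint_weight; apply: eq_bigr => k _.
rewrite /PB /deviate /PA /all_use; case: (k =P i) => [->|_] //.
by move: ci; case: (c i) => [[|x h]|].
Qed.

Lemma next_not_nil (c : config n 2) a i : c i != Some [::] -> next_config c a i != Some [::].
Proof.
rewrite /next_config; case: (c i) => [h|] //= _; case: ifP => // _.
by apply/eqP => [[]] /eqP; rewrite -size_eq0 size_rcons.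
Qed.

Lemma TB (i : 'I_n) (c : config n 2) : Tk (PB i) (WB i) c = WB i c - pnd i c.
Proof.
case: (eqVneq (c i) (Some [::])) => E.
- have key : Tk (PB i) (WB i) c = Tk (PB i) (WA i) c.
    rewrite /Tk; apply: eq_bigr => a _.
    case: (eqVneq (a i) idle) => ai.
      have H : (next_config c a i == Some [::]) = false.
        by rewrite /next_config E ai eqxx /=.
      by rewrite /WB H.
    by rewrite /joint_weight (bigD1 i) //= E /PB /deviate eqxx /f2_idle_first ffunE (negbTE ai) !mul0r.
  by rewrite key /WB /pnd E eqxx /=; ring.
- have key : Tk (PB i) (WB i) c = Tk PA (WA i) c.
    rewrite /Tk; apply: eq_bigr => a _.
    by rewrite jw_BA // /WB (negbTE (next_not_nil a E)).
  by rewrite key TA /WB (negbTE E).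
Qed.


Lemma mc_init : mc (@init_config n 2) = n.
Proof. by rewrite /mc -[RHS]card_ord; apply: eq_card => k; rewrite !inE. Qed.

Lemma WA_next_B (i : 'I_n) (a : {ffun 'I_n -> action 2}) : (4 <= n)%N ->
  a i == idle -> (forall k, k != i -> a k != idle) ->
  WA i (next_config (@init_config n 2) a) =
    Vf n - (Vf n - Vf n.-1) * \sum_(k | k != i) (succ (@init_config n 2) a k)%:R.
Proof.
move=> n4 ai sup; set c := @init_config n 2.
have si : ~~ succ c a i by apply/negP => /succ_nidle; rewrite ai.
have ci : c i != None by [].
have -> : WA i (next_config c a) = Vf (mc (next_config c a)).
  by rewrite /WA next_pend ci si.
case: (pickP (succ c a)) => [k sk | none].
- have ki : k != i by apply/eqP => E; move: si; rewrite -E sk.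
  have only : forall l, l != k -> ~~ succ c a l.
    move=> l lk; apply/negP => sl.
    have li : l != i by apply/eqP => E; move: si; rewrite -E sl.
    have n4' : (4 <= mc c)%N by rewrite /c mc_init.
    have [p /and4P [pA pi pk pl]] := exists_fourth (A := [pred k | c k != None]) i k l n4'.
    by apply: (two_succ sk sl _ pA pk pl (sup p pi)); rewrite eq_sym.
  rewrite (mc_one sk only) /c mc_init.
  rewrite (bigD1 k) //= big1 ?addr0; last first.
    by move=> l /andP [li lk]; rewrite (negbTE (only l lk)).
  by rewrite sk /=; ring.
- rewrite mc_none /c ?mc_init; last by move=> k; rewrite none.
  by rewrite big1 ?mulr0 ?subr0 // => k _; rewrite none.
Qed.


Lemma TB_init (i : 'I_n) : (4 <= n)%N ->
  Tk (PB i) (WA i) (@init_config n 2) =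
  Vf n - (Vf n - Vf n.-1) * ((n.-1)%:R * (2 * (2^-1)^+ n.-1)).
Proof.
move=> n4; set c := @init_config n 2.
set tr : pred 'I_n := fun k => k != i.
have HP : forall k h, c k = Some h -> PB i k h = if tr k then f2 R h else idle_d.
  by move=> k h [<-]; rewrite /PB /deviate /tr; case: (k == i).
rewrite /Tk (eq_bigr (fun a : {ffun 'I_n -> action 2} => \prod_k wt c tr k (a k) * WA i (next_config c a))); last first.
  by move=> a _; rewrite (@jw_wt (PB i) c tr a HP).
rewrite (eq_bigr (fun a : {ffun 'I_n -> action 2} => Vf n * \prod_k wt c tr k (a k)
   - (Vf n - Vf n.-1) * (\prod_k wt c tr k (a k) * \sum_(k | k != i) (succ c a k)%:R))); last first.
  move=> a _; case: (eqVneq (\prod_k wt c tr k (a k)) 0) => [->|nz].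
    by rewrite !mul0r !mulr0 subr0.
  rewrite WA_next_B //; first by ring.
    by have := supp nz i; rewrite /tr eqxx andbF.
  by move=> k ki; have := supp nz k; rewrite /tr ki.
have ci : c i != None by [].
have cardo : #|[pred k | (k != i) && (c k != None)]| = n.-1 by rewrite card_others // /c mc_init.
rewrite sumrB -!mulr_sumr sum_wt1 (@sum_succ_others c tr i (2 * (2^-1)^+ n.-1)) //.
  by rewrite cardo mulr1.
congr (_ * _ ^+ _); rewrite -cardo; apply: eq_card => k; by rewrite !inE andbC.
Qed.


Lemma WB0_lt : (5 <= n)%N ->
  1 + (Vf n - (Vf n - Vf n.-1) * ((n.-1)%:R * (2 * (2^-1)^+ n.-1))) < Vf n.
Proof.
case: n => [|m] // Hm.
have m0 : (m == 0)%N = false by move: Hm; case: m.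
have m1 : (m == 1)%N = false by move: Hm; case: m m0 => [|[|]].
rewrite /Vf /= eqSS m0 m1 exprVn (exprS _ m).
set X : R := 2 ^+ m.
have hX : X != 0 by rewrite expf_neq0.
have h1 : (m.+1%:R : R) != 0 by rewrite pnatr_eq0.
have h0 : (m%:R : R) != 0 by rewrite pnatr_eq0 m0.
have -> : 1 + (2 * X / m.+1%:R - (2 * X / m.+1%:R - X / m%:R) * (m%:R * (2 * X^-1)))
   = 2 * X / m.+1%:R - (m%:R - 3) / m.+1%:R.
  rewrite -[m.+1]addn1 natrD; field.
  by rewrite hX h0 natr1 pnatr_eq0.
have h4 : (4:R) <= m%:R by rewrite (ler_nat R 4 m).
have : (0:R) < (m%:R - 3) / m.+1%:R.
  by apply: divr_gt0; [lra | rewrite ltr0n].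
by rewrite ltrBlDr ltrDl.
Qed.


Definition nonneg_prof (P : profile R n 2) := forall k h y, 0 <= P k h y.

Lemma jw_ge0 P c a : nonneg_prof P -> 0 <= joint_weight P c a.
Proof.
move=> HP; rewrite /joint_weight; apply: prodr_ge0 => k _.
by case: (c k) => [h|] //=; rewrite ler0n.
Qed.

Lemma dist_ge0 P : nonneg_prof P -> forall t, all (fun x => 0 <= x.1) (dist_at P t).
Proof.
move=> HP; elim=> [|t IH]; first by rewrite /= ler01.
have -> : dist_at P t.+1 = step P (dist_at P t) by [].
apply/allP => x; rewrite /step => /flattenP [s /mapP [y ym ->] /mapP [a _ ->]] /=.
by apply: mulr_ge0; [exact: (allP IH) | exact: jw_ge0].
Qed.

Lemma Ex_ge0 P F t : nonneg_prof P -> (forall c, 0 <= F c) -> 0 <= Ex (dist_at P t) F.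
Proof.
move=> HP HF; rewrite /Ex big_seq; apply: sumr_ge0 => x xin.
by apply: mulr_ge0; [exact: (allP (dist_ge0 HP t)) | exact: HF].
Qed.

Lemma Ex_le P F G t : nonneg_prof P -> (forall c, F c <= G c) ->
  Ex (dist_at P t) F <= Ex (dist_at P t) G.
Proof.
move=> HP HF; rewrite /Ex big_seq [X in _ <= X]big_seq; apply: ler_sum => x xin.
by apply: ler_wpM2l; [exact: (allP (dist_ge0 HP t)) | exact: HF].
Qed.

Lemma Ex_scale d F (a : R) : Ex d (fun c => a * F c) = a * Ex d F.
Proof. by rewrite /Ex mulr_sumr; apply: eq_bigr => x _; ring. Qed.

Lemma pend_ge0 P t i : nonneg_prof P -> 0 <= pend_prob P t i predT.
Proof. by move=> HP; rewrite pend_probE; apply: Ex_ge0 => // c; rewrite ler0n. Qed.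

Lemma PA_ge0 : nonneg_prof PA.
Proof.
move=> k h y; rewrite /PA /all_use /f2 ffunE.
by case: (y == idle) => //; rewrite invr_ge0 ler0n.
Qed.

Lemma PB_ge0 i : nonneg_prof (PB i).
Proof.
move=> k h y; rewrite /PB /deviate; case: (k == i); last exact: PA_ge0.
case: h => [|x h] /=; first by rewrite ffunE ler0n.
exact: PA_ge0 k (x :: h) y.
Qed.

Lemma Vf_ge0 m : 0 <= Vf m.
Proof.
rewrite /Vf; case: (m == 1)%N; first exact: ler01.
by apply: divr_ge0; [apply: exprn_ge0; lra | rewrite ler0n].
Qed.

Lemma WA_ge0 i c : 0 <= WA i c.
Proof. by rewrite /WA; case: (c i != None) => //; exact: Vf_ge0. Qed.

Lemma WB_ge0 i c : 0 <= WB i c.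
Proof.
rewrite /WB; case: (c i == Some [::]); last exact: WA_ge0.
apply: addr_ge0; first exact: ler01.
rewrite /Tk; apply: sumr_ge0 => a _; apply: mulr_ge0; [exact: jw_ge0 (PB_ge0 i) | exact: WA_ge0].
Qed.

Lemma WA_le i c : WA i c <= 2 ^+ n * pnd i c.
Proof.
rewrite /WA /pnd; case: (boolP (c i != None)) => ci /=; last by rewrite mulr0.
rewrite mulr1.
have m1 := mc_pos ci.
have mn : (mc c <= n)%N by rewrite /mc -[X in (_ <= X)%N]card_ord max_card.
have h2 : (2:R) ^+ mc c <= 2 ^+ n by rewrite ler_eXn2l //; lra.
rewrite /Vf; case: (mc c == 1)%N.
  by apply: exprn_ege1; lra.
apply: le_trans h2; rewrite ler_pdivrMr ?ltr0n //.
by apply: ler_peMr; [apply: exprn_ge0; lra | rewrite ler1n].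
Qed.

End S.

Lemma series_ge (R : realType) (u : nat -> R) t : (forall t, 0 <= u t) ->
  ((\sum_(s < t) u s)%:E <= \sum_(t <oo) (u t)%:E)%E.
Proof.
move=> u0; rewrite -sumEFin -(big_mkord xpredT (fun s => (u s)%:E)).
by apply: nneseries_lim_ge => k _ _; rewrite lee_fin.
Qed.

Lemma series_le (R : realType) (u : nat -> R) (B : R) : (forall t, 0 <= u t) ->
  (forall t, \sum_(s < t) u s <= B) -> (\sum_(t <oo) (u t)%:E <= B%:E)%E.
Proof.
move=> u0 uB; apply: lime_le.
  by apply: is_cvg_nneseries => k _ _; rewrite lee_fin.
apply: nearW => t; rewrite /= (big_mkord xpredT (fun s => (u s)%:E)) sumEFin lee_fin.
exact: uB.
Qed.

Lemma part2 (R : realType) (n : nat) (hn : (5 <= n)%N) (i : 'I_n) :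
  (exp_latency (PB R i) i < exp_latency (PA R (n:=n)) i)%E.
Proof.
set pA := fun t => pend_prob (PA R (n:=n)) t i predT.
set pB := fun t => pend_prob (PB R i) t i predT.
set WB0 := WB R i (@init_config n 2).
have pA0 t : 0 <= pA t by apply: pend_ge0; exact: PA_ge0.
have pB0 t : 0 <= pB t by apply: pend_ge0; exact: PB_ge0.
have potA := potential (TA R i).
have potB := potential (TB R i).
have WA0 : WA R i (@init_config n 2) = Vf R n by rewrite /WA /= mc_init.
have WB0E : WB0 = 1 + (Vf R n - (Vf R n - Vf R n.-1) * (n.-1%:R * (2 * 2^-1 ^+ n.-1))).
  by rewrite /WB0 /WB /= TB_init //; apply: leq_trans hn.
have WB0lt : WB0 < Vf R n by rewrite WB0E; apply: WB0_lt.
have HB : (exp_latency (PB R i) i <= WB0%:E)%E.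
  apply: series_le => // t.
  have := potB t; have := Ex_ge0 t (PB_ge0 R i) (WB_ge0 R i).
  rewrite -/WB0 => h1 h2; rewrite /pB; lra.
have [t Ht] : exists t, WB0 < \sum_(s < t) pA s.
  case: (pselect (exists t, WB0 < \sum_(s < t) pA s)) => // nE.
  have H t : \sum_(s < t) pA s <= WB0.
    by rewrite leNgt; apply/negP => h; apply: nE; exists t.
  set d := Vf R n - WB0.
  have d0 : 0 < d by rewrite /d subr_gt0.
  have K : forall t, d <= 2 ^+ n * pA t.
    move=> s; have := potA s; rewrite WA0 => e.
    have := Ex_le s (@PA_ge0 R n) (WA_le R i).
    rewrite Ex_scale -pend_probE e -/(pA s).
    have := H s; rewrite /d; lra.
  have Ksum : forall t, t%:R * d <= 2 ^+ n * \sum_(s < t) pA s.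
    move=> s; have e : \sum_(k < s) d = s%:R * d by rewrite sumr_const card_ord mulr_natl.
    by rewrite -e mulr_sumr; apply: ler_sum => k _; exact: K.
  have Kup : forall t, \sum_(s < t) pA s <= Vf R n.
    move=> s; have := potA s; have := Ex_ge0 s (@PA_ge0 R n) (WA_ge0 R i).
    rewrite WA0 => h1 h2; lra.
  have B0 : 0 <= 2 ^+ n * Vf R n / d.
    by apply: divr_ge0; [apply: mulr_ge0; [apply: exprn_ge0; lra | exact: Vf_ge0] | lra].
  have := archi_boundP B0; set T := Num.Def.archi_bound _ => hT.
  have h1 : 2 ^+ n * Vf R n < T%:R * d by rewrite -ltr_pdivrMr.
  have h2 := Ksum T; have h3 := Kup T.
  have h4 : 2 ^+ n * \sum_(s < T) pA s <= 2 ^+ n * Vf R n.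
    by apply: ler_wpM2l => //; apply: exprn_ge0; lra.
  lra.
have HA : ((\sum_(s < t) pA s)%:E <= exp_latency (PA R (n:=n)) i)%E.
  exact: series_ge.
apply: (le_lt_trans HB); apply: (lt_le_trans _ HA); by rewrite lte_fin.
Qed.

Lemma cond_nil (R : realType) (n : nat) (P : profile R n 2) (i : 'I_n) :
  cond_latency P i [::] = exp_latency P i.
Proof.
have hp : hist_prob P i [::] = 1.
  by rewrite /hist_prob /pend_prob /= big_cons big_nil /= addr0.
rewrite /cond_latency hp invr1 mule1 /exp_latency.
apply: eq_eseriesr => t _; congr (_%:E).
rewrite maxn0 /pend_prob; apply: eq_bigr => x _.
by case: (x.2 i) => // h; rewrite take0 eqxx.
Qed.

Lemma valid_g (R : realType) : valid_protocol (f2_idle_first R).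
Proof.
move=> h; case: h => [|x h] /=.
  split; first by move=> a; rewrite ffunE ler0n.
  by rewrite (eq_bigr (fun a => (a == idle)%:R)) ?sum_idle // => a _; rewrite ffunE.
split; first by move=> a; rewrite /f2 ffunE; case: (a == idle) => //; rewrite invr_ge0 ler0n.
rewrite /f2 !big_ord_recr big_ord0 /= !ffunE /=; lra.
Qed.

Unset Implicit Arguments.
Set Strict Implicit.

Theorem corollary2 (R : realType) (n : nat) (hn : (5 <= n)%N) :
  ~ @equilibrium R n 2 (f2 R) /\
  forall i : 'I_n,
    (exp_latency (deviate (f2 R) (f2_idle_first R) i) i
       < exp_latency (@all_use R n 2 (f2 R)) i)%E.
Proof.
have P2 : forall i : 'I_n,
    (exp_latency (deviate (f2 R) (f2_idle_first R) i) i
       < exp_latency (@all_use R n 2 (f2 R)) i)%E.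
  move=> i; exact: (@part2 R n hn i).
split => // Heq.
have n0 : (0 < n)%N by apply: leq_trans hn.
set i0 : 'I_n := Ordinal n0.
have hp : 0 < hist_prob (@all_use R n 2 (f2 R)) i0 [::].
  by rewrite /hist_prob /pend_prob /= big_cons big_nil /= addr0 ltr01.
have := Heq i0 [::] (f2_idle_first R) (valid_g R) hp.
have -> : switch_at (f2 R) (f2_idle_first R) (size ([::] : history 2)) = f2_idle_first R.
  rewrite /switch_at /=; apply: boolp.funext => h; by [].
rewrite !cond_nil => H.
have := P2 i0; rewrite ltNge H.
by [].
Qed.
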